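(* Let $\varepsilon>0$ and let $(u_n)_{n=1}^\infty$ be a real sequence. Then $(u_n)_{n=1}^\infty$ is $\varepsilon$-approximately subadditive if and only if there exist real sequences $(v_n)_{n=1}^\infty$ and $(w_n)_{n=1}^\infty$ such that $(v_n)$ is subadditive, $0\le w_n\le\varepsilon$ for all $n\in\mathbb{N}$, and $u_n=v_n+w_n$ for all $n\in\mathbb{N}$ (in particular $v_n\le u_n$ for all $n$, i.e. $(v_n)$ is a subadditive minorant of $(u_n)$).
   Context: $\mathbb{N}=\{1,2,3,\dots\}$. For $n\in\mathbb{N}$, a partition of $n$ is a finite list $n_1,\dots,n_k\in\mathbb{N}$ ($k\ge1$) with $n_1+\cdots+n_k=n$. A sequence $(u_n)_{n=1}^\infty$ is called $\varepsilon$-approximately subadditive (for a fixed $\varepsilon>0$) if for every $n\in\mathbb{N}$ and every partition $n_1,\dots,n_k$ of $n$ one has $u_n\le u_{n_1}+\cdots+u_{n_k}+\varepsilon$. It is called subadditive if for every $n\in\mathbb{N}$ and every partition $n_1,\dots,n_k$ of $n$ one has $u_n\le u_{n_1}+\cdots+u_{n_k}$. *)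

(* Defs.v *)
From Stdlib Require Import Reals List.
Open Scope R_scope.

(* A real sequence (u_n)_{n>=1} is represented by u : nat -> R; only the
   values at positive indices matter. *)

Definition is_partition (n : nat) (p : list nat) : Prop :=
  p <> nil /\ Forall (fun k => (0 < k)%nat) p /\ fold_right Nat.add 0%nat p = n.

Definition sum_over (u : nat -> R) (p : list nat) : R :=
  fold_right (fun k s => u k + s) 0 p.

Definition approx_subadditive (eps : R) (u : nat -> R) : Prop :=
  forall (n : nat) (p : list nat), (0 < n)%nat -> is_partition n p ->
    u n <= sum_over u p + eps.

Definition subadditive (u : nat -> R) : Prop :=
  forall (n : nat) (p : list nat), (0 < n)%nat -> is_partition n p ->
    u n <= sum_over u p.

(* Main.v *)
Require Import Defs.
From Stdlib Require Import Reals List Lra Lia Arith Wf_nat.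
Open Scope R_scope.

Section S.
Variable u : nat -> R.

Fixpoint mins (g : nat -> R) (n j : nat) : R :=
  match j with
  | O => u n
  | S j' => Rmin (mins g n j') (g (S j') + g (n - S j')%nat)
  end.

Fixpoint vf (f : nat) : nat -> R :=
  match f with
  | O => u
  | S f' => fun n => mins (vf f') n (n - 1)
  end.

Definition vv (n : nat) : R := vf n n.

Lemma mins_le_u g n j : mins g n j <= u n.
Proof. induction j; simpl. lra. pose proof (Rmin_l (mins g n j) (g (S j) + g (n - S j)%nat)). lra. Qed.

Lemma mins_le_split g n j k : (1 <= k <= j)%nat -> mins g n j <= g k + g (n - k)%nat.
Proof.
  induction j; intros H; simpl. lia.
  destruct (Nat.eq_dec k (S j)) as [->|Hk].
  - apply Rmin_r.
  - eapply Rle_trans. apply Rmin_l. apply IHj. lia.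
Qed.

Lemma mins_cases g n j : mins g n j = u n \/
  exists k, (1 <= k <= j)%nat /\ mins g n j = g k + g (n - k)%nat.
Proof.
  induction j; simpl. now left.
  unfold Rmin; destruct (Rle_dec _ _).
  - destruct IHj as [H|[k [Hk H]]]. now left. right; exists k; split; [lia|auto].
  - right; exists (S j); split; [lia|auto].
Qed.

Lemma mins_ext g h n j : (forall k, (1 <= k <= j)%nat -> g k = h k /\ g (n - k)%nat = h (n - k)%nat) ->
  mins g n j = mins h n j.
Proof.
  induction j; intros H; simpl. auto.
  rewrite IHj by (intros; apply H; lia).
  destruct (H (S j)) as [H1 H2]. lia. rewrite H1, H2. auto.
Qed.

Lemma vf_stable : forall n f, (n <= f)%nat -> vf f n = vv n.
Proof.
  intro n. induction n as [n IH] using (well_founded_induction lt_wf).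
  intros f Hf. unfold vv.
  destruct n as [|n'].
  - destruct f; simpl; auto.
  - destruct f as [|f']. lia. simpl.
    apply mins_ext. intros k Hk. split.
    + rewrite (IH k) by lia. rewrite (IH k) by lia. auto.
    + rewrite (IH (S n' - k)%nat) by lia. rewrite (IH (S n' - k)%nat) by lia. auto.
Qed.

Lemma vv_eq n : (1 <= n)%nat -> vv n = mins vv n (n - 1).
Proof.
  intros Hn. destruct n as [|n']. lia.
  unfold vv at 1. simpl vf.
  apply mins_ext. intros k Hk. split.
  - apply vf_stable. lia.
  - apply vf_stable. lia.
Qed.

Lemma vv_le_u n : (1 <= n)%nat -> vv n <= u n.
Proof. intros. rewrite vv_eq by auto. apply mins_le_u. Qed.

Lemma vv_split n k : (1 <= k < n)%nat -> vv n <= vv k + vv (n - k)%nat.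
Proof. intros. rewrite (vv_eq n) by lia. apply mins_le_split. lia. Qed.

Lemma sum_over_app g p q : sum_over g (p ++ q) = sum_over g p + sum_over g q.
Proof. induction p; simpl. lra. rewrite IHp. lra. Qed.

Lemma fold_app p q : fold_right Nat.add 0%nat (p ++ q) = (fold_right Nat.add 0%nat p + fold_right Nat.add 0%nat q)%nat.
Proof. induction p; simpl; lia. Qed.

Lemma vv_realized : forall n, (1 <= n)%nat -> exists p, is_partition n p /\ vv n = sum_over u p.
Proof.
  intro n. induction n as [n IH] using (well_founded_induction lt_wf).
  intros Hn. rewrite vv_eq by auto.
  destruct (mins_cases vv n (n-1)) as [H|[k [Hk H]]].
  - exists (n :: nil). split.
    + split. discriminate. split. constructor. lia. constructor. simpl. lia.
    + rewrite H. simpl. lra.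
  - destruct (IH k) as [p1 [[Hp1 [Fp1 Sp1]] E1]]; try lia.
    destruct (IH (n - k)%nat) as [p2 [[Hp2 [Fp2 Sp2]] E2]]; try lia.
    exists (p1 ++ p2). split.
    + split. destruct p1; [congruence|discriminate].
      split. apply Forall_app; auto.
      rewrite fold_app. lia.
    + rewrite sum_over_app, H, E1, E2. auto.
Qed.

Lemma pos_sum p : p <> nil -> Forall (fun k => (0 < k)%nat) p -> (0 < fold_right Nat.add 0%nat p)%nat.
Proof. destruct p. congruence. intros _ F. inversion F. simpl. lia. Qed.

Lemma vv_subadd : subadditive vv.
Proof.
  intros n p Hn [Hne [F Hs]]. revert n Hn Hs Hne F.
  induction p as [|a rest IHp]; intros n Hn Hs Hne F. congruence.
  apply Forall_cons_iff in F as [H1 H2].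
  destruct rest as [|b rest'].
  - simpl in *. subst n. rewrite Nat.add_0_r. lra.
  - pose proof (pos_sum (b :: rest') ltac:(discriminate) H2).
    simpl sum_over. simpl in Hs.
    eapply Rle_trans. apply (vv_split _ a). simpl in H. lia.
    apply Rplus_le_compat_l. apply IHp; auto; simpl in *; try lia. discriminate.
Qed.

End S.

Theorem proposition2 (eps : R) (u : nat -> R) (heps : 0 < eps) :
  approx_subadditive eps u <->
  exists v w : nat -> R,
    subadditive v /\
    (forall n : nat, (0 < n)%nat -> 0 <= w n <= eps) /\
    (forall n : nat, (0 < n)%nat -> u n = v n + w n).
Proof.
  split.
  - intros Ha. exists (vv u), (fun n => u n - vv u n). split; [|split].
    + apply vv_subadd.
    + intros n Hn. pose proof (vv_le_u u n Hn).
      destruct (vv_realized u n Hn) as [p [Hp E]].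
      pose proof (Ha n p Hn Hp). lra.
    + intros. lra.
  - intros [v [w [Hv [Hw Huv]]]] n p Hn Hp.
    assert (Hle : sum_over v p <= sum_over u p).
    { destruct Hp as [_ [F _]]. induction F; simpl. lra.
      rewrite (Huv x) by auto. pose proof (Hw x H). lra. }
    pose proof (Hv n p Hn Hp). rewrite (Huv n Hn). pose proof (Hw n Hn). lra.
Qed.
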